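(* Let $\mathcal T$ be an admissible labeled tree. Then $\Delta(\mathcal T)=0$ if and only if the root's label appears on no other vertex, and every other label appears on exactly two vertices $v,v'$, which lie at the same distance from the root and whose parents carry the same label. In that case the edges $(p(v),v)$ and $(p(v'),v')$ are paired row by row, giving a perfect pairing of the edges between each pair of consecutive levels.
   Context: Setting: $T$ is a finite rooted tree with levels (root at level $t$, children of a level-$s$ vertex at level $s-1$); $p(v)$ denotes the parent of $v$. A labeling gives each vertex $v$ a label $\ell(v)\in[N]$. The labeled tree $\mathcal T$ is admissible if (i) whenever $u$ is the parent of $v$ and $v$ the parent of $w$, $\ell(u)\ne\ell(w)$; (ii) for every edge $\{u,v\}$ there is another edge $\{u',v'\}$ with $\{\ell(u'),\ell(v')\}=\{\ell(u),\ell(v)\}$. $|V(\mathcal T)|$ is the number of distinct labels used (including the root's), $|E(\mathcal T)|$ the number of edges, and $\Delta(\mathcal T)=\tfrac12|E(\mathcal T)|-|V(\mathcal T)|+1$. *)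

(* Defs.v *)
From HB Require Import structures.
From mathcomp Require Import all_boot all_order all_algebra.
Set Implicit Arguments. Unset Strict Implicit. Unset Printing Implicit Defensive.
Import GRing.Theory Num.Theory.

(* The edges are {par v, v} for v <> root.  The level of the paper is
   t - depth v, so "same level" = "same distance from the root" = same depth. *)
Definition rooted_tree (T : finType) (root : T) (par : T -> T) (depth : T -> nat) :=
  depth root = 0%N /\ forall v, v != root -> depth v = (depth (par v)).+1.

Section Labeled.
Variables (T : finType) (N : nat) (root : T) (par : T -> T) (lab : T -> 'I_N).

Definition adm_i :=
  forall w, w != root -> par w != root -> lab (par (par w)) != lab w.

Definition adm_ii :=
  forall v, v != root -> exists2 w, (w != root) && (w != v) &
    [set lab (par w); lab w] = [set lab (par v); lab v].

Definition admissible := adm_i /\ adm_ii.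

Definition nV : nat := #|[set lab v | v in T]|.
Definition nE : nat := #|[set v : T | v != root]|.

Definition Delta : rat := ((nE%:R / 2%:R) - nV%:R + 1)%R.
End Labeled.

(* Main.v *)
Require Import Defs.
From mathcomp Require Import all_boot all_order all_algebra.
From mathcomp Require Import zify lra.

Lemma sum_eq_le (I : finType) (P : pred I) (F G : I -> nat) :
  (forall i, P i -> F i <= G i) -> \sum_(i | P i) G i <= \sum_(i | P i) F i ->
  forall i, P i -> F i = G i.
Proof.
move=> hle hs.
have e : \sum_(i | P i) G i = \sum_(i | P i) F i + \sum_(i | P i) (G i - F i).
  by rewrite -big_split /=; apply: eq_bigr => i hi; rewrite subnKC // hle.
have : \sum_(i | P i) (G i - F i) == 0.
  move: hs; rewrite e; set a := \sum_(i | P i) F i; set b := \sum_(i | _) _.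
  move=> h; apply/eqP; lia.
rewrite sum_nat_eq0 => /forallP h i hi; have := h i; rewrite hi /= subn_eq0 => h'.
by apply/eqP; rewrite eqn_leq h' hle.
Qed.

Lemma my_card_sum (T : finType) (A B : pred T) :
  #|[set v | A v && B v]| = \sum_(v | A v) (B v : nat).
Proof.
rewrite -sum1_card big_mkcond [RHS]big_mkcond; apply: eq_bigr => v _.
by rewrite inE; case: (A v); case: (B v).
Qed.

Lemma fwd (T : finType) (N : nat) (root : T) (par : T -> T) (depth : T -> nat) (lab : T -> 'I_N) :
  rooted_tree root par depth -> admissible root par lab ->
  (nE root + 2 = 2 * nV lab)%N ->
  [/\ (forall v, v != root -> lab v != lab root),
      (forall v, v != root -> #|[set w | lab w == lab v]| = 2%N) &
      (forall v w, v != w -> lab v = lab w -> depth v = depth w /\ lab (par v) = lab (par w))].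
Proof.
move=> [d0 dS] [ai aii] hE.
have dpos : forall v, v != root -> 0 < depth v by move=> v /dS ->.
pose I := [set lab v | v in T].
have inI : forall v, lab v \in I by move=> v; apply/imsetP; exists v.
have [m hm] : exists m : 'I_N -> T, forall l, l \in I ->
    lab (m l) = l /\ forall v, lab v = l -> depth (m l) <= depth v.
  apply: (@fin_all_exists _ (fun _ => T) (fun l ml => l \in I -> lab ml = l /\ forall v, lab v = l -> depth ml <= depth v)) => l.
  case: (boolP (l \in I)) => [/imsetP [v0 _ ->] | nI]; last by exists root.
  case: (@arg_minnP _ v0 (fun v => lab v == lab v0) depth (eqxx _)) => mm /eqP hmm hmin.
  by exists mm => _; split => // v hv; apply: hmin; apply/eqP.
pose r := lab root.
pose L := I :\ r.
pose d l := depth (m l).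
pose pr l := lab (par (m l)).
pose P l := [set pr l; l].
have hmL : forall l, l \in L -> m l != root /\ l != r.
  move=> l; rewrite !inE => /andP [hlr hlI]; split => //.
  apply/eqP => e; move: hlr; have [h _] := hm l hlI; by rewrite -h e eqxx.
have hD : forall l, l \in L -> d (pr l) < d l.
  move=> l hl; have [hmr _] := hmL l hl.
  have [_ h] := hm (pr l) (inI _).
  have := h (par (m l)) erefl; rewrite /d (dS _ hmr); lia.
have hinj : forall l l', l \in L -> l' \in L -> P l = P l' -> l = l'.
  move=> l l' hl hl' e; apply/eqP; apply/negP => /negP hne.
  have h1 : l \in P l' by rewrite -e !inE eqxx orbT.
  have h2 : l' \in P l by rewrite e !inE eqxx orbT.
  move: h1 h2; rewrite !inE => /orP [] /eqP e1; last by rewrite e1 eqxx in hne.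
  move=> /orP [] /eqP e2; last by rewrite e2 eqxx in hne.
  have := hD l hl; have := hD l' hl'; rewrite -e1 -e2; lia.
pose S l := [set v | (v != root) && ([set lab (par v); lab v] == P l)].
have hS2 : forall l, l \in L -> 2 <= #|S l|.
  move=> l hl; have [hmr _] := hmL l hl.
  have [w /andP [hw1 hw2] hw3] := aii (m l) hmr.
  have hlI : l \in I by move: hl; rewrite inE => /andP[].
  have [e _] := hm l hlI.
  apply: (@leq_trans #|[set m l; w]|); first by rewrite cards2 eq_sym hw2.
  apply: subset_leq_card.
  apply/subsetP => x; rewrite !inE => /orP [] /eqP ->; rewrite ?hw1 ?hmr /=.
    by rewrite /P /pr e.
  by rewrite hw3 /P /pr e.
have inner : forall s, \sum_(l in L) (s == P l : nat) <= 1.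
  move=> s; case: (pickP [pred l | (l \in L) && (s == P l)]) => [l0 /andP [hl0 hs] | none].
    rewrite (bigD1 l0) //= hs big1 // => l /andP [hl hne].
    case: eqP => // e; move/eqP: hs => e0.
    by move: hne; rewrite (hinj l l0 hl hl0) ?eqxx // -e -e0.
  rewrite big1 // => l hl; have := none l; rewrite /= hl /=; by case: (s == P l).
have hsumS : \sum_(l in L) #|S l| =
    \sum_(v | v != root) \sum_(l in L) ([set lab (par v); lab v] == P l : nat).
  rewrite exchange_big; apply: eq_bigr => l _; rewrite /S.
  by rewrite (my_card_sum _ (fun v => v != root) (fun v => [set lab (par v); lab v] == P l)).
have hnE : nE root = \sum_(v | v != root) 1.
  rewrite /nE -(my_card_sum _ (fun v => v != root) (fun _ => true)).
  by apply: eq_card => v; rewrite !inE andbT.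
have hL : nV lab = (#|L|).+1.
  by rewrite /nV (cardsD1 r I) (inI root).
have up : \sum_(l in L) #|S l| <= nE root.
  rewrite hsumS hnE; apply: leq_sum => v _; exact: inner.
have low : #|L| * 2 <= \sum_(l in L) #|S l|.
  rewrite -sum_nat_const; apply: leq_sum => l hl.
  exact: (hS2 l hl).
have HS2 : forall l, l \in L -> #|S l| = 2.
  move=> l hl; symmetry.
  apply: (@sum_eq_le _ (fun l => l \in L) (fun _ => 2) (fun l => #|S l|) hS2 _ l hl).
  rewrite sum_nat_const; lia.
have hsum : \sum_(v | v != root) 1 <=
    \sum_(v | v != root) \sum_(l in L) ([set lab (par v); lab v] == P l : nat).
  by rewrite -hsumS -hnE; lia.
have Hcov : forall v, v != root -> exists2 l, l \in L & [set lab (par v); lab v] = P l.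
  move=> v hv.
  have := (@sum_eq_le _ (fun v => v != root)
     (fun v => \sum_(l in L) ([set lab (par v); lab v] == P l : nat)) (fun _ => 1)
     (fun v _ => inner _) hsum v hv) => /=.
  case: (pickP [pred l | (l \in L) && ([set lab (par v); lab v] == P l)]) => [l0 /andP [hl0 hs] | none].
    by move=> _; exists l0 => //; apply/eqP.
  rewrite big1 // => l hl; have := none l; rewrite /= hl /=; by case: (_ == _).
have hdr : d (lab root) = 0.
  have [_ h] := hm (lab root) (inI root); have := h root erefl; rewrite /d d0; lia.
have H : forall n v, depth v = n ->
    depth v = d (lab v) /\ (v != root -> lab (par v) = pr (lab v)).
  elim=> [|n IH] v hvn.
    have -> : v = root by case: (eqVneq v root) => // hne; have := dpos v hne; lia.
    by rewrite d0 hdr eqxx.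
  have hv : v != root by apply/eqP => e; move: hvn; rewrite e d0.
  have hu : depth (par v) = n by move: hvn; rewrite dS // => [[]].
  have [IH1 IH2] := IH (par v) hu.
  have [l hl e] := Hcov v hv.
  have [_ hlr] := hmL l hl.
  have hlI : l \in I by move: hl; rewrite inE => /andP[].
  have hDl := hD l hl.
  have mv : lab v \in P l by rewrite -e !inE eqxx orbT.
  have ml : l \in [set lab (par v); lab v] by rewrite e !inE eqxx orbT.
  have mu : lab (par v) \in P l by rewrite -e !inE eqxx.
  case: (eqVneq (lab v) l) => hvl.
    have hul : lab (par v) = pr l.
      move: mu; rewrite !inE => /orP [/eqP // | /eqP hul].
      have : pr l \in P l by rewrite !inE eqxx.
      rewrite -e hul hvl !inE orbb => /eqP h; move: hDl; rewrite h; lia.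
    split; last by move=> _; rewrite hvl.
    have [_ hmin] := hm l hlI; have := hmin v hvl.
    move: hDl IH1; rewrite hul hvl /d; lia.
  have hvp : lab v = pr l by move: mv; rewrite !inE (negbTE hvl) orbF => /eqP.
  have hul : lab (par v) = l.
    by move: ml; rewrite !inE eq_sym (eq_sym l) (negbTE hvl) orbF => /eqP.
  have hu0 : par v != root by apply/eqP => e0; move: hlr; rewrite /r -hul e0 eqxx.
  have := ai v hv hu0; by rewrite IH2 // hul hvp eqxx.
have H1 : forall v, depth v = d (lab v) by move=> v; have [] := H _ v erefl.
have H2 : forall v, v != root -> lab (par v) = pr (lab v)
  by move=> v; have [] := H _ v erefl.
have C1 : forall v, v != root -> lab v != lab root.
  move=> v hv; apply/eqP => e; have := dpos v hv; by rewrite H1 e hdr.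
split => //.
  move=> v hv; set l := lab v.
  have hl : l \in L by rewrite !inE C1 // inI.
  rewrite -(HS2 l hl); apply: eq_card => w; rewrite !inE.
  apply/idP/idP.
    move=> /eqP hw; have hw0 : w != root by apply/eqP => e; move: (C1 v hv); rewrite -/l -hw e eqxx.
    by rewrite hw0 /= H2 // hw.
  move=> /andP [hw0 /eqP e].
  have mw : lab w \in P l by rewrite -e !inE eqxx orbT.
  have ml : l \in [set lab (par w); lab w] by rewrite e !inE eqxx orbT.
  move: mw; rewrite !inE => /orP [/eqP hwp|] //.
  have hDl := hD l hl.
  case: (eqVneq (lab w) l) => [hh|hwl]; first by [].
  have hpw : lab (par w) = l.
    by move: ml; rewrite !inE eq_sym (eq_sym l) (negbTE hwl) orbF => /eqP.
  exfalso; have := dS w hw0; rewrite !H1 hpw hwp; move: hDl; rewrite /d; lia.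
move=> v w hvw e.
have hv : v != root.
  by apply/eqP => e0; move: hvw; rewrite e0 => hw; move: (C1 w); rewrite eq_sym hw -e e0 eqxx; move/(_ isT).
have hw : w != root.
  by apply/eqP => e0; move: (C1 v hv); rewrite e e0 eqxx.
by rewrite !H1 !H2 // e.
Qed.

Lemma nE_card (T : finType) (root : T) : (nE root).+1 = #|T|.
Proof.
rewrite /nE (@eq_card _ _ (predC1 root)); last by move=> v; rewrite !inE.
rewrite cardC1; have : 0 < #|T| by apply/card_gt0P; exists root.
lia.
Qed.

Lemma bwd (T : finType) (N : nat) (root : T) (par : T -> T) (depth : T -> nat) (lab : T -> 'I_N) :
  (forall v, v != root -> lab v != lab root) ->
  (forall v, v != root -> #|[set w | lab w == lab v]| = 2%N) ->
  (nE root + 2 = 2 * nV lab)%N.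
Proof.
move=> C1 C2.
pose I := [set lab v | v in T].
have inI : forall v, lab v \in I by move=> v; apply/imsetP; exists v.
pose r := lab root.
have hT : #|T| = \sum_(j in I) #|[set w | lab w == j]|.
  rewrite -sum1_card (partition_big lab (fun j => j \in I)) /=; last by move=> v _; exact: inI.
  apply: eq_bigr => j _; rewrite -sum1_card; apply: eq_bigl => v; by rewrite inE.
rewrite (bigD1 r) /= in hT; last exact: inI.
have h1 : #|[set w | lab w == r]| = 1.
  rewrite -(cards1 root); apply: eq_card => w; rewrite !inE.
  case: (eqVneq w root) => [-> |hw]; first by rewrite eqxx.
  by apply/negbTE; apply: C1.
rewrite h1 in hT.
have h2 : \sum_(j in I | j != r) #|[set w | lab w == j]| = \sum_(j in I :\ r) 2.
  rewrite [RHS](eq_bigl (fun j => (j \in I) && (j != r))); last by move=> j; rewrite !inE andbC.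
  apply: eq_bigr => j /andP [/imsetP [v _ ->] hv].
  apply: C2; apply/eqP => e; move: hv; by rewrite e eqxx.
rewrite h2 sum_nat_const in hT.
have := nE_card _ root; rewrite /nV -/I (cardsD1 r I) inI add1n.
move=> h; have : (nE root).+1 = 1 + #|I :\ r| * 2 by rewrite h hT.
lia.
Qed.

Import GRing.Theory Num.Theory.
Local Open Scope ring_scope.

Lemma delta_iff (T : finType) (N : nat) (root : T) (lab : T -> 'I_N) :
  Delta root lab = 0 <-> (nE root + 2 = 2 * nV lab)%N.
Proof.
rewrite /Delta; split.
  move=> h; apply/eqP; rewrite -(eqr_nat rat) natrD natrM; apply/eqP.
  move: h; set a : rat := (nE root)%:R; set b : rat := (nV lab)%:R; move=> h; lra.
move=> h; have : ((nE root + 2)%N%:R : rat) = (2 * nV lab)%N%:R by rewrite h.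
rewrite natrD natrM.
set a : rat := (nE root)%:R; set b : rat := (nV lab)%:R; move=> h'; lra.
Qed.

Lemma sigma_ex (T : finType) (N : nat) (root : T) (par : T -> T) (depth : T -> nat) (lab : T -> 'I_N) :
  (forall v, v != root -> lab v != lab root) ->
  (forall v, v != root -> #|[set w | lab w == lab v]| = 2%N) ->
  (forall v w, v != w -> lab v = lab w -> depth v = depth w /\ lab (par v) = lab (par w)) ->
  exists sigma : T -> T, forall v, v != root ->
       [/\ sigma v != root, sigma v != v & sigma (sigma v) = v] /\
       [/\ depth (sigma v) = depth v, lab (sigma v) = lab v
          & lab (par (sigma v)) = lab (par v)].
Proof.
move=> C1 C2 C3.
have other : forall v, v != root -> exists2 w, w != v & lab w = lab v /\
     forall x, lab x = lab v -> x = v \/ x = w.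
  move=> v hv.
  have hc : #|[set w | lab w == lab v] :\ v| = 1%N.
    by have := C2 v hv; rewrite (cardsD1 v) inE eqxx /=; lia.
  have [w ew] := cards1P (introT eqP hc).
  have : w \in [set w | lab w == lab v] :\ v by rewrite ew inE.
  rewrite !inE => /andP [hwv /eqP hw]; exists w => //; split => // x hx.
  case: (eqVneq x v) => [-> | hxv]; [by left | right].
  have : x \in [set w | lab w == lab v] :\ v by rewrite !inE hxv hx eqxx.
  by rewrite ew inE => /eqP.
pose sigma v := if [pick w | (w != v) && (lab w == lab v)] is Some w then w else v.
have hs : forall v, v != root -> sigma v != v /\ lab (sigma v) = lab v.
  move=> v hv; rewrite /sigma; case: pickP => [w /andP [h1 /eqP h2] // | none].
  have [w h1 [h2 _]] := other v hv; have := none w; by rewrite /= h1 h2 eqxx.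
exists sigma => v hv.
have [s1 s2] := hs v hv.
have sr : sigma v != root by apply/eqP => e; move: (C1 v hv); rewrite -s2 e eqxx.
have [t1 t2] := hs _ sr.
have [w _ [_ hx]] := other v hv.
have [c1 c2] := C3 _ _ s1 s2.
split; split => //.
have hsv := hx _ s2; have hssv := hx (sigma (sigma v)) (etrans t2 s2).
case: hssv => // e; case: hsv => e'.
  by move: s1; rewrite e' eqxx.
by move: t1; rewrite e e' eqxx.
Qed.

Theorem lemma2p14 (T : finType) (N : nat) (root : T) (par : T -> T)
    (depth : T -> nat) (lab : T -> 'I_N) :
  rooted_tree root par depth ->
  admissible root par lab ->
  (Delta root lab = 0 <->
     [/\ (forall v, v != root -> lab v != lab root),
         (forall v, v != root -> #|[set w | lab w == lab v]| = 2%N) &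
         (forall v w, v != w -> lab v = lab w ->
            depth v = depth w /\ lab (par v) = lab (par w))])
  /\
  (Delta root lab = 0 ->
     exists sigma : T -> T, forall v, v != root ->
       [/\ sigma v != root, sigma v != v & sigma (sigma v) = v] /\
       [/\ depth (sigma v) = depth v, lab (sigma v) = lab v
          & lab (par (sigma v)) = lab (par v)]).
Proof.
move=> ht ha.
have key : Delta root lab = 0 <->
     [/\ (forall v, v != root -> lab v != lab root),
         (forall v, v != root -> #|[set w | lab w == lab v]| = 2%N) &
         (forall v w, v != w -> lab v = lab w ->
            depth v = depth w /\ lab (par v) = lab (par w))].
  rewrite delta_iff; split; first exact: fwd.
  by case=> C1 C2 _; exact: (@bwd T N root par depth lab C1 C2).
split => //.
by move=> /key [C1 C2 C3]; apply: sigma_ex.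
Qed.
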